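(* Let $\mathcal{T}=\{0,1\}$, let $P\in\Delta_{\mathcal{T},\mathcal{X},\mathcal{Y}}$ with $P(T=0)>0$ and $P(T=1)>0$, and for $t\in\{0,1\}$ write $\bar t=1-t$. Then: (1) If $\mathcal{X}_0\cap\mathcal{X}_1=\emptyset$, then $T$ is conditionally independent of $Y$ given $X$ under every $Q\in\Delta_P$. (2) If $\mathcal{Y}_0\cap\mathcal{Y}_1=\emptyset$, then $T$ is conditionally independent of $X$ given $Y$ under every $Q\in\Delta_P$. (3) Suppose $\mathcal{X}_0\cap\mathcal{X}_1\neq\emptyset\neq\mathcal{Y}_0\cap\mathcal{Y}_1$. (a) If some $t\in\{0,1\}$ satisfies $\mathcal{X}_t\setminus\mathcal{X}_{\bar t}\ne\emptyset$ and $\mathcal{Y}_t\setminus\mathcal{Y}_{\bar t}\neq\emptyset$, then $\arg\max_{Q\in\Delta_P}H_Q(T\mid X,Y)$ does not intersect the relative interior of $\Delta_P$. (b) If $\mathcal{X}_t\setminus\mathcal{X}_{\bar t}\ne\emptyset$ for some $t$ and there exists $Q^*$ in the relative interior of $\Delta_P$ with $Q^*\in\arg\max_{Q\in\Delta_P}H_Q(T\mid X,Y)$, then under the conditional distribution $Q^*(\cdot\mid Y\in\mathcal{Y}_t)$, $T$ is conditionally independent of $Y$ given $X$. (c) If $\mathcal{Y}_t\setminus\mathcal{Y}_{\bar t}\ne\emptyset$ for some $t$ and there exists $Q^*$ in the relative interior of $\Delta_P$ with $Q^*\in\arg\max_{Q\in\Delta_P}H_Q(T\mid X,Y)$, then under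 the conditional distribution $Q^*(\cdot\mid X\in\mathcal{X}_t)$, $T$ is conditionally independent of $X$ given $Y$.
   Context: $T,X,Y$ are random variables with finite state spaces $\mathcal{T},\mathcal{X},\mathcal{Y}$; $\Delta_{\mathcal{T},\mathcal{X},\mathcal{Y}}$ is the set of all joint distributions on $\mathcal{T}\times\mathcal{X}\times\mathcal{Y}$. For $P\in\Delta_{\mathcal{T},\mathcal{X},\mathcal{Y}}$, $\Delta_P=\{Q\in\Delta_{\mathcal{T},\mathcal{X},\mathcal{Y}}: Q(X=x,T=t)=P(X=x,T=t),\ Q(Y=y,T=t)=P(Y=y,T=t)\ \forall x,y,t\}$. For $t$ with $P(T=t)>0$: $\mathcal{X}_t=\{x: P(X=x\mid T=t)>0\}$, $\mathcal{Y}_t=\{y: P(Y=y\mid T=t)>0\}$. *)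

(* Defs.v *)
From mathcomp Require Import all_boot.
From Stdlib Require Import Reals.
Set Implicit Arguments. Unset Strict Implicit. Unset Printing Implicit Defensive.
Open Scope R_scope.

Section Defs.
Variables (X Y : finType).

(* A (not necessarily normalized) function on T x X x Y, with T = {0,1} = bool
   (false = 0, true = 1). *)
Definition fun3 := bool -> X -> Y -> R.

Definition sum3 (Q : fun3) : R :=
  \big[Rplus/0]_(t : bool) \big[Rplus/0]_(x : X) \big[Rplus/0]_(y : Y) Q t x y.

Definition pT  (Q : fun3) t   := \big[Rplus/0]_(x : X) \big[Rplus/0]_(y : Y) Q t x y.
Definition pX  (Q : fun3) x   := \big[Rplus/0]_(t : bool) \big[Rplus/0]_(y : Y) Q t x y.
Definition pY  (Q : fun3) y   := \big[Rplus/0]_(t : bool) \big[Rplus/0]_(x : X) Q t x y.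
Definition pTX (Q : fun3) t x := \big[Rplus/0]_(y : Y) Q t x y.
Definition pTY (Q : fun3) t y := \big[Rplus/0]_(x : X) Q t x y.
Definition pXY (Q : fun3) x y := \big[Rplus/0]_(t : bool) Q t x y.

Definition is_dist (Q : fun3) : Prop :=
  (forall t x y, 0 <= Q t x y) /\ sum3 Q = 1.

Definition in_DeltaP (P Q : fun3) : Prop :=
  is_dist Q /\
  (forall t x, pTX Q t x = pTX P t x) /\
  (forall t y, pTY Q t y = pTY P t y).

Definition inXt (P : fun3) (t : bool) (x : X) : Prop := 0 < pTX P t x / pT P t.
Definition inYt (P : fun3) (t : bool) (y : Y) : Prop := 0 < pTY P t y / pT P t.

Definition CI_T_Y_given_X (Q : fun3) : Prop :=
  forall t x y, Q t x y * pX Q x = pTX Q t x * pXY Q x y.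
Definition CI_T_X_given_Y (Q : fun3) : Prop :=
  forall t x y, Q t x y * pY Q y = pTY Q t y * pXY Q x y.

Definition condH (Q : fun3) : R :=
  - sum3 (fun t x y =>
      if Rlt_dec 0 (Q t x y) then Q t x y * ln (Q t x y / pXY Q x y) else 0).

Definition is_argmax_condH (P Q : fun3) : Prop :=
  in_DeltaP P Q /\ forall Q', in_DeltaP P Q' -> condH Q' <= condH Q.

Definition in_aff_DeltaP (P Q : fun3) : Prop :=
  exists l : seq (R * fun3),
    \big[Rplus/0]_(p <- l) p.1 = 1 /\
    (forall p, List.In p l -> in_DeltaP P p.2) /\
    (forall t x y, Q t x y = \big[Rplus/0]_(p <- l) (p.1 * p.2 t x y)).

Definition in_relint_DeltaP (P Q : fun3) : Prop :=
  in_DeltaP P Q /\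
  exists eps, 0 < eps /\
    forall Q', in_aff_DeltaP P Q' ->
      (forall t x y, Rabs (Q' t x y - Q t x y) < eps) -> in_DeltaP P Q'.

Definition indYt (P : fun3) t y : R := if Rlt_dec 0 (pTY P t y / pT P t) then 1 else 0.
Definition indXt (P : fun3) t x : R := if Rlt_dec 0 (pTX P t x / pT P t) then 1 else 0.

Definition cond_on_Yt (P Q : fun3) (t : bool) : fun3 :=
  fun t' x y => Q t' x y * indYt P t y / sum3 (fun t'' x' y' => Q t'' x' y' * indYt P t y').
Definition cond_on_Xt (P Q : fun3) (t : bool) : fun3 :=
  fun t' x y => Q t' x y * indXt P t x / sum3 (fun t'' x' y' => Q t'' x' y' * indXt P t x').

End Defs.

(* Main.v *)
Require Import Defs.
From mathcomp Require Import all_boot.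
From Stdlib Require Import Reals Lra.
From HB Require Import structures.
Set Warnings "-notation-overridden".
Set Implicit Arguments. Unset Strict Implicit.
Open Scope R_scope.

Lemma RplusA : associative Rplus. Proof. by move=> *; rewrite Rplus_assoc. Qed.
HB.instance Definition _ := Monoid.isComLaw.Build R 0 Rplus RplusA Rplus_comm Rplus_0_l.

Lemma sumR_scal (I : finType) c (F : I -> R) :
  \big[Rplus/0]_i (c * F i) = c * \big[Rplus/0]_i F i.
Proof.
apply: (big_rec2 (fun a b => a = c * b)); first by rewrite Rmult_0_r.
by move=> i y1 y2 _ ->; rewrite Rmult_plus_distr_l.
Qed.

Lemma sumR_ge0 (I : finType) (F : I -> R) :
  (forall i, 0 <= F i) -> 0 <= \big[Rplus/0]_i F i.
Proof.
move=> H; apply: (big_ind (fun a => 0 <= a)); [lra | move=> a b Ha Hb; lra | by []].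
Qed.

Lemma le_sumR (I : finType) (F : I -> R) j :
  (forall i, 0 <= F i) -> F j <= \big[Rplus/0]_i F i.
Proof.
move=> H; rewrite (bigD1 j) //=.
set S := bigop _ _ _.
have : 0 <= S.
  rewrite /S -big_filter; apply: (big_ind (fun a => 0 <= a)); [lra | move=> a b Ha Hb; lra | by []].
lra.
Qed.

Lemma sum0_each (I : finType) (F : I -> R) j :
  (forall i, 0 <= F i) -> \big[Rplus/0]_i F i = 0 -> F j = 0.
Proof. move=> H H0; have := @le_sumR I F j H; have := H j; lra. Qed.

Lemma sum1pt (I : finType) (F : I -> R) a :
  (forall i, i != a -> F i = 0) -> \big[Rplus/0]_i F i = F a.
Proof.
move=> H; rewrite (bigD1 a) //= big1; first by rewrite Rplus_0_r.
by move=> i Hi; apply: H; move: Hi; rewrite ?andTb.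
Qed.

Lemma sum2pt (I : finType) (F : I -> R) a b : a != b ->
  (forall i, i != a -> i != b -> F i = 0) -> \big[Rplus/0]_i F i = F a + F b.
Proof.
move=> Hab H; rewrite (bigD1 a) //= (bigD1 b) /=; last by rewrite eq_sym.
rewrite big1; first by rewrite Rplus_0_r.
by move=> i; rewrite ?andTb => /andP [Hi Hi']; apply: H.
Qed.

Lemma sumR_add (I : finType) (F G : I -> R) :
  \big[Rplus/0]_i (F i + G i) = \big[Rplus/0]_i F i + \big[Rplus/0]_i G i.
Proof. exact: big_split. Qed.

Lemma sumR_bool (F : bool -> R) : \big[Rplus/0]_i F i = F true + F false.
Proof. exact: big_bool. Qed.

Section S.
Variables (X Y : finType).
Implicit Types (P Q M : fun3 X Y).

Lemma pXE M x : pX M x = pTX M true x + pTX M false x.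
Proof. by rewrite /pX sumR_bool. Qed.
Lemma pYE M y : pY M y = pTY M true y + pTY M false y.
Proof. by rewrite /pY sumR_bool. Qed.
Lemma pXYE M x y : pXY M x y = M true x y + M false x y.
Proof. by rewrite /pXY sumR_bool. Qed.

Lemma crossX M x : (forall y y', M true x y * M false x y' = M true x y' * M false x y) ->
  forall s y, M s x y * pX M x = pTX M s x * pXY M x y.
Proof.
move=> H s y; rewrite pXE pXYE.
have E : M true x y * pTX M false x = pTX M true x * M false x y.
  rewrite /pTX -sumR_scal Rmult_comm -sumR_scal; apply: eq_bigr => y' _.
  rewrite H; ring.
case: s; nra.
Qed.

Lemma crossY M y : (forall x x', M true x y * M false x' y = M true x' y * M false x y) ->
  forall s x, M s x y * pY M y = pTY M s y * pXY M x y.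
Proof.
move=> H s x; rewrite pYE pXYE.
have E : M true x y * pTY M false y = pTY M true y * M false x y.
  rewrite /pTY -sumR_scal Rmult_comm -sumR_scal; apply: eq_bigr => x' _.
  rewrite H; ring.
case: s; nra.
Qed.

Lemma pTX_ge0 Q s x : (forall t x y, 0 <= Q t x y) -> 0 <= pTX Q s x.
Proof. by move=> H; apply: sumR_ge0. Qed.
Lemma pTY_ge0 Q s y : (forall t x y, 0 <= Q t x y) -> 0 <= pTY Q s y.
Proof. by move=> H; apply: sumR_ge0. Qed.
Lemma pT_ge0 Q s : (forall t x y, 0 <= Q t x y) -> 0 <= pT Q s.
Proof. by move=> H; apply: sumR_ge0 => x; apply: sumR_ge0. Qed.

Lemma notX_zero P Q s x : is_dist P -> 0 < pT P s -> in_DeltaP P Q -> ~ inXt P s x ->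
  forall y, Q s x y = 0.
Proof.
move=> [HP _] Hs [[HQ _] [HX _]] Hn y.
have H0 : pTX P s x = 0.
  have := pTX_ge0 s x HP; move=> Hge.
  destruct (Rle_lt_or_eq_dec _ _ Hge) as [Hlt|]; last by [].
  exfalso; apply: Hn; rewrite /inXt; apply: Rdiv_lt_0_compat => //.
apply: (@sum0_each Y (fun y => Q s x y)) => //; by rewrite -/(pTX Q s x) HX.
Qed.

Lemma notY_zero P Q s y : is_dist P -> 0 < pT P s -> in_DeltaP P Q -> ~ inYt P s y ->
  forall x, Q s x y = 0.
Proof.
move=> [HP _] Hs [[HQ _] [_ HY]] Hn x.
have H0 : pTY P s y = 0.
  have := pTY_ge0 s y HP; move=> Hge.
  destruct (Rle_lt_or_eq_dec _ _ Hge) as [Hlt|]; last by [].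
  exfalso; apply: Hn; rewrite /inYt; apply: Rdiv_lt_0_compat => //.
apply: (@sum0_each X (fun x => Q s x y)) => //; by rewrite -/(pTY Q s y) HY.
Qed.

Lemma part1 P : is_dist P -> 0 < pT P false -> 0 < pT P true ->
  (~ exists x, inXt P false x /\ inXt P true x) ->
     forall Q, in_DeltaP P Q -> CI_T_Y_given_X Q.
Proof.
move=> HP H0 H1 Hn Q HQ s x y; apply: crossX => y1 y2.
destruct (Rlt_dec 0 (pTX P false x / pT P false)) as [Hf|Hf].
- have Ht : ~ inXt P true x by move=> Ht; apply: Hn; exists x.
  by rewrite !(notX_zero HP H1 HQ Ht); ring.
- by rewrite !(notX_zero HP H0 HQ Hf); ring.
Qed.

Lemma part2 P : is_dist P -> 0 < pT P false -> 0 < pT P true ->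
  (~ exists y, inYt P false y /\ inYt P true y) ->
     forall Q, in_DeltaP P Q -> CI_T_X_given_Y Q.
Proof.
move=> HP H0 H1 Hn Q HQ s x y; apply: crossY => x1 x2.
destruct (Rlt_dec 0 (pTY P false y / pT P false)) as [Hf|Hf].
- have Ht : ~ inYt P true y by move=> Ht; apply: Hn; exists y.
  by rewrite !(notY_zero HP H1 HQ Ht); ring.
- by rewrite !(notY_zero HP H0 HQ Hf); ring.
Qed.

Definition ind {T : eqType} (a b : T) : R := if a == b then 1 else 0.

Lemma sum_ind (T : finType) (a b : T) : a != b ->
  \big[Rplus/0]_i (ind i a - ind i b) = 0.
Proof.
move=> Hab; rewrite (@sum2pt T _ a b Hab).
  by rewrite /ind eqxx (negbTE Hab) eq_sym (negbTE Hab) eqxx; ring.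
by move=> i Ha Hb; rewrite /ind (negbTE Ha) (negbTE Hb); ring.
Qed.

Definition Dir t xa xb ya yb : fun3 X Y :=
  fun s x y => if s == t then (ind x xa - ind x xb) * (ind y ya - ind y yb) else 0.
Definition addD (Q D : fun3 X Y) c : fun3 X Y := fun s x y => Q s x y + c * D s x y.
Definition prodP (P : fun3 X Y) : fun3 X Y := fun s x y => pTX P s x * pTY P s y / pT P s.

Lemma pTX_Dir t xa xb ya yb s x : ya != yb -> pTX (Dir t xa xb ya yb) s x = 0.
Proof.
move=> Hy; rewrite /pTX /Dir; case: (s == t).
  by rewrite sumR_scal sum_ind // Rmult_0_r.
by rewrite big1.
Qed.

Lemma pTY_Dir t xa xb ya yb s y : xa != xb -> pTY (Dir t xa xb ya yb) s y = 0.
Proof.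
move=> Hx; rewrite /pTY /Dir; case: (s == t).
  under eq_bigr => x _ do rewrite Rmult_comm.
  by rewrite sumR_scal sum_ind // Rmult_0_r.
by rewrite big1.
Qed.

Lemma sum3E Q : sum3 Q = \big[Rplus/0]_s \big[Rplus/0]_x pTX Q s x.
Proof. by []. Qed.

Lemma DeltaP_add P Q D c : in_DeltaP P Q ->
  (forall s x, pTX D s x = 0) -> (forall s y, pTY D s y = 0) ->
  (forall s x y, 0 <= addD Q D c s x y) -> in_DeltaP P (addD Q D c).
Proof.
move=> [[HQ HS] [HX HY]] HDX HDY Hn.
have EX : forall s x, pTX (addD Q D c) s x = pTX Q s x.
  by move=> s x; rewrite /pTX /addD sumR_add sumR_scal -/(pTX D s x) HDX; ring.
have EY : forall s y, pTY (addD Q D c) s y = pTY Q s y.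
  by move=> s y; rewrite /pTY /addD sumR_add sumR_scal -/(pTY D s y) HDY; ring.
split; [split|split] => //.
- rewrite sum3E -HS sum3E; apply: eq_bigr => s _; apply: eq_bigr => x _; exact: EX.
- by move=> s x; rewrite EX.
- by move=> s y; rewrite EY.
Qed.

Lemma prod_in P : is_dist P -> 0 < pT P false -> 0 < pT P true -> in_DeltaP P (prodP P).
Proof.
move=> [HP HS] H0 H1.
have Hpos : forall s, 0 < pT P s by case.
have EY : forall s, \big[Rplus/0]_y pTY P s y = pT P s.
  by move=> s; rewrite /pTY /pT exchange_big.
have EX : forall s x, pTX (prodP P) s x = pTX P s x.
  move=> s x.
  rewrite [LHS](_ : _ = \big[Rplus/0]_y ((pTX P s x / pT P s) * pTY P s y)); last first.
    by apply: eq_bigr => y _; rewrite /prodP /Rdiv; ring.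
  rewrite sumR_scal EY; field; have := Hpos s; lra.
have EY2 : forall s y, pTY (prodP P) s y = pTY P s y.
  move=> s y.
  rewrite [LHS](_ : _ = \big[Rplus/0]_x ((pTY P s y / pT P s) * pTX P s x)); last first.
    by apply: eq_bigr => x _; rewrite /prodP /Rdiv; ring.
  rewrite sumR_scal -/(pT P s); field; have := Hpos s; lra.
split; [split|split] => //.
- move=> s x y; rewrite /prodP; apply: Rmult_le_pos; last first.
    by apply: Rlt_le; apply: Rinv_0_lt_compat.
  by apply: Rmult_le_pos; [apply: pTX_ge0 | apply: pTY_ge0].
- rewrite sum3E -HS sum3E; apply: eq_bigr => s _; apply: eq_bigr => x _; exact: EX.
Qed.

Lemma le1_dist Q s x y : is_dist Q -> Q s x y <= 1.
Proof.
move=> [HQ HS].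
apply: (Rle_trans _ (pTX Q s x)); first exact: (@le_sumR Y (fun y => Q s x y)).
apply: (Rle_trans _ (pT Q s)); first by apply: (@le_sumR X (fun x => pTX Q s x)) => x'; apply: pTX_ge0.
rewrite -HS; apply: (@le_sumR bool (fun s => pT Q s)) => s'; exact: pT_ge0.
Qed.

Lemma prod_pos P s x y : inXt P s x -> inYt P s y -> 0 < pT P s -> 0 < prodP P s x y.
Proof.
rewrite /inXt /inYt /prodP => Hx Hy Hs.
have -> : pTX P s x * pTY P s y / pT P s = (pTX P s x / pT P s) * (pTY P s y / pT P s) * pT P s.
  field; lra.
by apply: Rmult_lt_0_compat => //; apply: Rmult_lt_0_compat.
Qed.

Lemma dist_bounds P Q s x y : in_DeltaP P Q -> 0 <= Q s x y <= 1.
Proof. move=> [HQ _]; split; [exact: HQ.1 | exact: le1_dist]. Qed.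

Lemma relint_pos P Q s x y : is_dist P -> 0 < pT P false -> 0 < pT P true ->
  in_relint_DeltaP P Q -> inXt P s x -> inYt P s y -> 0 < Q s x y.
Proof.
move=> HP H0 H1 [HQ [eps [He Hrel]]] Hx Hy.
have HR := prod_in HP H0 H1.
have Hs : 0 < pT P s by case: s Hx Hy.
have HRp := prod_pos Hx Hy Hs.
have [Hq0 _] := dist_bounds s x y HQ.
destruct (Rle_lt_or_eq_dec _ _ Hq0) as [|Heq]; first by [].
exfalso.
set d := eps / 4.
pose Q2 : fun3 X Y := fun s x y => (1 + d) * Q s x y + - d * prodP P s x y.
have Hin : in_DeltaP P Q2.
  apply: Hrel.
    exists [:: (1 + d, Q); (- d, prodP P)]; split; [|split].
    - rewrite !big_cons big_nil /=; ring.
    - by move=> p /= [<-|[<-|[]]].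
    - by move=> t x' y'; rewrite !big_cons big_nil /= /Q2; ring.
  move=> t x' y'; rewrite /Q2.
  have := dist_bounds t x' y' HQ; have := dist_bounds t x' y' HR => Hb1 Hb2.
  have Hd : 0 < d by rewrite /d; lra.
  have Ha : 0 <= d * Q t x' y' <= d by split; nra.
  have Hb : 0 <= d * prodP P t x' y' <= d by split; nra.
  apply: Rabs_def1; rewrite /d in Hd Ha Hb *; lra.
have := (proj1 (proj1 Hin)) s x y; rewrite /Q2 -Heq.
have : 0 < d * prodP P s x y by apply: Rmult_lt_0_compat => //; rewrite /d; lra.
lra.
Qed.

Lemma Dir_cases t xa xb ya yb s x y : xa != xb -> ya != yb ->
  let D := Dir t xa xb ya yb s x y in
  D = 0 \/ D = 1 \/ (D = -1 /\ s = t /\ ((x = xb /\ y = ya) \/ (x = xa /\ y = yb))).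
Proof.
move=> Hx Hy /=; rewrite /Dir /ind.
have Hx' : xb != xa by rewrite eq_sym.
have Hy' : yb != ya by rewrite eq_sym.
case: (s =P t) => [->|_]; last by left.
case: (@eqP _ x xa) => [Exa|Hxa]; case: (@eqP _ x xb) => [Exb|Hxb];
  try (by move: Hx; rewrite -Exa -Exb eqxx);
  case: (@eqP _ y ya) => [Eya|Hya]; case: (@eqP _ y yb) => [Eyb|Hyb];
  try (by move: Hy; rewrite -Eya -Eyb eqxx);
  try (by left; ring); try (by right; left; ring);
  right; right; (split; [ring|split=> //]); auto.
Qed.

Lemma Dir_abs t xa xb ya yb s x y : xa != xb -> ya != yb ->
  Rabs (Dir t xa xb ya yb s x y) <= 1.
Proof.
move=> Hx Hy; case: (Dir_cases t s x y Hx Hy) => [->|[->|[-> _]]].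
- rewrite Rabs_R0; lra.
- rewrite Rabs_R1; lra.
- rewrite Rabs_Ropp Rabs_R1; lra.
Qed.

Lemma perturb_in P Q t xa xb ya yb : is_dist P -> 0 < pT P false -> 0 < pT P true ->
  in_relint_DeltaP P Q -> xa != xb -> ya != yb ->
  inXt P t xa -> inXt P t xb -> inYt P t ya -> inYt P t yb ->
  exists e0, 0 < e0 /\ forall e, 0 < e < e0 ->
    in_DeltaP P (addD Q (Dir t xa xb ya yb) e).
Proof.
move=> HP H0 H1 [HQ [eps [He Hrel]]] Hx Hy Hxa Hxb Hya Hyb.
have HR := prod_in HP H0 H1.
have Ht : 0 < pT P t by case: t Hxa Hxb Hya Hyb.
set D := Dir t xa xb ya yb.
set g := Rmin (prodP P t xb ya) (prodP P t xa yb).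
have Hg : 0 < g.
  apply: Rmin_glb_lt; exact: prod_pos.
have HR' : in_DeltaP P (addD (prodP P) D g).
  apply: DeltaP_add => //.
  - by move=> s x; apply: pTX_Dir.
  - by move=> s y; apply: pTY_Dir.
  move=> s x y; rewrite /addD.
  have := proj1 (proj1 HR) s x y.
  have := Dir_cases t s x y Hx Hy; rewrite /= -/D.
  case=> [->|[->|[-> [-> [[-> ->]|[-> ->]]]]]] => H.
  - lra.
  - lra.
  - have := Rmin_l (prodP P t xb ya) (prodP P t xa yb); rewrite -/g; lra.
  - have := Rmin_r (prodP P t xb ya) (prodP P t xa yb); rewrite -/g; lra.
exists eps; split => // e [He0 He1].
apply: Hrel.
  exists [:: (1, Q); (e / g, addD (prodP P) D g); (- (e / g), prodP P)]; split; [|split].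
  - rewrite !big_cons big_nil /=; ring.
  - by move=> p /= [<-|[<-|[<-|[]]]].
  - move=> s x y; rewrite !big_cons big_nil /= /addD; field; lra.
move=> s x y; rewrite /addD.
have := Dir_abs t s x y Hx Hy; rewrite -/D => HD.
rewrite (_ : Q s x y + e * D s x y - Q s x y = e * D s x y); last by ring.
rewrite Rabs_mult Rabs_pos_eq; last lra.
have : e * Rabs (D s x y) <= e * 1 by apply: Rmult_le_compat_l; lra.
lra.
Qed.

Definition ent (u v : R) : R := if Rlt_dec 0 u then u * ln (u / v) else 0.
Definition cellf a b := ent a (a + b) + ent b (a + b).
Definition cell Q x y := cellf (Q true x y) (Q false x y).

Lemma condHE Q : condH Q = - \big[Rplus/0]_x \big[Rplus/0]_y cell Q x y.
Proof.
rewrite /condH /sum3 sumR_bool -sumR_add; congr (- _); apply: eq_bigr => x _.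
rewrite -sumR_add; apply: eq_bigr => y _; by rewrite /cell /cellf /ent pXYE.
Qed.

Lemma cell_t Q t x y : cell Q x y = cellf (Q t x y) (Q (~~ t) x y).
Proof.
case: t => //=; rewrite /cell /cellf (Rplus_comm (Q false x y)); ring.
Qed.

Lemma cellf_pure a : cellf a 0 = 0.
Proof.
rewrite /cellf /ent Rplus_0_r.
case: (Rlt_dec 0 a) => Ha /=; last by case: (Rlt_dec 0 0) => H /=; [lra|ring].
rewrite /Rdiv Rinv_r; last lra.
rewrite ln_1; case: (Rlt_dec 0 0) => H /=; [lra|ring].
Qed.

Lemma ln_div x y : 0 < x -> 0 < y -> ln (x / y) = ln x - ln y.
Proof.
move=> Hx Hy; rewrite /Rdiv ln_mult ?ln_Rinv //; last exact: Rinv_0_lt_compat.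
Qed.

Lemma phi_conv u v : 0 < u -> 0 < v -> u * ln u + (v - u) * (ln u + 1) <= v * ln v.
Proof.
move=> Hu Hv.
have H1 : ln (u / v) <= u / v - 1.
  have := exp_ineq1_le (ln (u / v)); rewrite exp_ln; last exact: Rdiv_lt_0_compat.
  lra.
rewrite ln_div // in H1.
have : v * (ln u - ln v) <= v * (u / v - 1) by apply: Rmult_le_compat_l; lra.
have -> : v * (u / v - 1) = u - v by field; lra.
nra.
Qed.

Lemma cellf_pos a b : 0 < a -> 0 < b ->
  cellf a b = a * ln a + b * ln b - (a + b) * ln (a + b).
Proof.
move=> Ha Hb; rewrite /cellf /ent.
case: (Rlt_dec 0 a) => [_|] /=; last lra.
case: (Rlt_dec 0 b) => [_|] /=; last lra.
rewrite !ln_div; try lra; ring.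
Qed.

Lemma cellf_change a a2 b : 0 < a -> 0 < a2 -> 0 < b ->
  cellf a2 b - cellf a b <= (a2 - a) * (ln a2 - ln (a + b)).
Proof.
move=> Ha Ha2 Hb; rewrite !cellf_pos //.
have := phi_conv Ha2 Ha.
have := @phi_conv (a + b) (a2 + b) ltac:(lra) ltac:(lra).
nra.
Qed.

Lemma condH_diff Q t xa xb ya yb e : xa != xb -> ya != yb ->
  condH (addD Q (Dir t xa xb ya yb) e) = condH Q -
   ((cell (addD Q (Dir t xa xb ya yb) e) xa ya - cell Q xa ya) +
    (cell (addD Q (Dir t xa xb ya yb) e) xa yb - cell Q xa yb) +
    (cell (addD Q (Dir t xa xb ya yb) e) xb ya - cell Q xb ya) +
    (cell (addD Q (Dir t xa xb ya yb) e) xb yb - cell Q xb yb)).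
Proof.
move=> Hx Hy; set Q' := addD Q _ e.
pose cc x y := cell Q' x y - cell Q x y.
rewrite !condHE.
have E : \big[Rplus/0]_x \big[Rplus/0]_y cell Q' x y =
   \big[Rplus/0]_x \big[Rplus/0]_y cell Q x y + \big[Rplus/0]_x \big[Rplus/0]_y cc x y.
  rewrite -sumR_add; apply: eq_bigr => x _; rewrite -sumR_add; apply: eq_bigr => y _.
  rewrite /cc; ring.
have Hy0 : forall x y, y != ya -> y != yb -> cc x y = 0.
  move=> x y H1 H2; rewrite /cc /cell /Q' /addD /Dir /ind (negbTE H1) (negbTE H2).
  case: (true == t); case: (false == t); rewrite ?Rminus_0_r ?Rmult_0_r ?Rplus_0_r; ring.
have Hx0 : forall x y, x != xa -> x != xb -> cc x y = 0.
  move=> x y H1 H2; rewrite /cc /cell /Q' /addD /Dir /ind (negbTE H1) (negbTE H2).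
  case: (true == t); case: (false == t); rewrite ?Rminus_0_r ?Rmult_0_l ?Rmult_0_r ?Rplus_0_r; ring.
have F : \big[Rplus/0]_x \big[Rplus/0]_y cc x y = cc xa ya + cc xa yb + cc xb ya + cc xb yb.
  rewrite (sum2pt Hx); last by move=> x H1 H2; apply: big1 => y _; exact: Hx0.
  rewrite (sum2pt Hy); last by move=> y H1 H2; exact: Hy0.
  rewrite (sum2pt Hy); last by move=> y H1 H2; exact: Hy0.
  ring.
rewrite E F /cc; ring.
Qed.

Lemma addD_nt Q t xa xb ya yb e x y :
  addD Q (Dir t xa xb ya yb) e (~~ t) x y = Q (~~ t) x y.
Proof. rewrite /addD /Dir; case: t => /=; ring. Qed.

Lemma addD_tt Q t xa xb ya yb e x y :
  addD Q (Dir t xa xb ya yb) e t x y =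
  Q t x y + e * ((ind x xa - ind x xb) * (ind y ya - ind y yb)).
Proof. by rewrite /addD /Dir eqxx. Qed.

Lemma ind_eq {T : eqType} (a : T) : ind a a = 1.
Proof. by rewrite /ind eqxx. Qed.
Lemma ind_neq {T : eqType} (a b : T) : a != b -> ind a b = 0.
Proof. by move=> H; rewrite /ind (negbTE H). Qed.

Lemma cc_pure Q t xa xb ya yb e x y : Q (~~ t) x y = 0 ->
  cell (addD Q (Dir t xa xb ya yb) e) x y - cell Q x y = 0.
Proof. by move=> H; rewrite !(cell_t _ t) addD_nt H !cellf_pure; ring. Qed.

Lemma cc_gen Q t xa xb ya yb e x y :
  cell (addD Q (Dir t xa xb ya yb) e) x y - cell Q x y =
  cellf (Q t x y + e * ((ind x xa - ind x xb) * (ind y ya - ind y yb))) (Q (~~ t) x y)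
  - cellf (Q t x y) (Q (~~ t) x y).
Proof. by rewrite !(cell_t _ t) addD_nt addD_tt. Qed.

Lemma arith_a a b e : 0 < a -> 0 < b -> 0 < e -> e < b ->
  (a + e - a) * (ln (a + e) - ln (a + b)) < 0.
Proof.
move=> Ha Hb He Heb.
have : ln (a + e) < ln (a + b) by apply: ln_increasing; lra.
nra.
Qed.

Lemma arith_bc a b a' b' e0 : 0 < a -> 0 < b -> 0 < a' -> 0 < b' -> a * b' < a' * b ->
  0 < e0 -> exists e, 0 < e < e0 /\ e < a' /\
   (a + e - a) * (ln (a + e) - ln (a + b)) +
   (a' - e - a') * (ln (a' - e) - ln (a' + b')) < 0.
Proof.
move=> Ha Hb Ha' Hb' Hlt He0.
set d := a' * b - a * b'. set S := a + b + a' + b'.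
have Hd : 0 < d by rewrite /d; lra.
have HS : 0 < S by rewrite /S; lra.
set m := Rmin e0 (Rmin a' (d / S)).
have Hm : 0 < m by apply: Rmin_glb_lt => //; apply: Rmin_glb_lt => //; exact: Rdiv_lt_0_compat.
have Hm1 := Rmin_l e0 (Rmin a' (d / S)).
have Hm2 := Rmin_l a' (d / S).
have Hm3 := Rmin_r a' (d / S).
have Hm4 := Rmin_r e0 (Rmin a' (d / S)).
rewrite -/m in Hm1 Hm4.
exists (m / 2); split; [lra|split; [lra|]].
have HeS : m / 2 * S < d.
  have : m / 2 < d / S by lra.
  move=> H; have := Rmult_lt_compat_r S _ _ HS H.
  have -> : d / S * S = d by field; lra.
  done.
have Hprod : (a + m / 2) * (a' + b') < (a + b) * (a' - m / 2).
  rewrite /S /d in HeS; nra.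
have : ln ((a + m / 2) * (a' + b')) < ln ((a + b) * (a' - m / 2)).
  apply: ln_increasing => //; apply: Rmult_lt_0_compat; lra.
rewrite !ln_mult; try lra.
nra.
Qed.

Lemma pT_pos P s : 0 < pT P false -> 0 < pT P true -> 0 < pT P s.
Proof. by case: s. Qed.

Lemma inX_both P t x : inXt P false x -> inXt P true x -> inXt P t x.
Proof. by case: t. Qed.
Lemma inY_both P t y : inYt P false y -> inYt P true y -> inYt P t y.
Proof. by case: t. Qed.

Lemma neq_of_in P t (x x1 : X) : inXt P (~~ t) x -> ~ inXt P (~~ t) x1 -> x != x1.
Proof. by move=> H1 H2; apply/eqP => E; apply: H2; rewrite -E. Qed.
Lemma neqY_of_in P t (y y1 : Y) : inYt P (~~ t) y -> ~ inYt P (~~ t) y1 -> y != y1.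
Proof. by move=> H1 H2; apply/eqP => E; apply: H2; rewrite -E. Qed.

Lemma part3a P Q t x0 y0 x1 y1 : is_dist P -> 0 < pT P false -> 0 < pT P true ->
  inXt P false x0 -> inXt P true x0 -> inYt P false y0 -> inYt P true y0 ->
  inXt P t x1 -> ~ inXt P (~~ t) x1 -> inYt P t y1 -> ~ inYt P (~~ t) y1 ->
  is_argmax_condH P Q -> ~ in_relint_DeltaP P Q.
Proof.
move=> HP H0 H1 Hx0f Hx0t Hy0f Hy0t Hx1 Hx1n Hy1 Hy1n [HQ Hmax] Hrel.
have Hx : x0 != x1 := neq_of_in (inX_both (~~ t) Hx0f Hx0t) Hx1n.
have Hy : y0 != y1 := neqY_of_in (inY_both (~~ t) Hy0f Hy0t) Hy1n.
have [e0 [He0 Hin]] := perturb_in HP H0 H1 Hrel Hx Hy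
  (inX_both t Hx0f Hx0t) Hx1 (inY_both t Hy0f Hy0t) Hy1.
have Ha : 0 < Q t x0 y0 := relint_pos HP H0 H1 Hrel (inX_both t Hx0f Hx0t) (inY_both t Hy0f Hy0t).
have Hb : 0 < Q (~~ t) x0 y0 :=
  relint_pos HP H0 H1 Hrel (inX_both (~~ t) Hx0f Hx0t) (inY_both (~~ t) Hy0f Hy0t).
have Hnt := pT_pos (~~ t) H0 H1.
have Zx := notX_zero HP Hnt HQ Hx1n.
have Zy := notY_zero HP Hnt HQ Hy1n.
set e := Rmin e0 (Q (~~ t) x0 y0) / 2.
have Hm1 := Rmin_l e0 (Q (~~ t) x0 y0).
have Hm2 := Rmin_r e0 (Q (~~ t) x0 y0).
have Hm : 0 < Rmin e0 (Q (~~ t) x0 y0) by apply: Rmin_glb_lt.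
have He : 0 < e < e0 by rewrite /e; lra.
have HQ' := Hin e He.
have := Hmax _ HQ'.
rewrite condH_diff // (cc_pure _ _ _ _ _ (Zy x0)) (cc_pure _ _ _ _ _ (Zx y0))
  (cc_pure _ _ _ _ _ (Zx y1)) cc_gen !ind_eq (ind_neq Hx) (ind_neq Hy).
have := cellf_change (a := Q t x0 y0) (a2 := Q t x0 y0 + e) Ha ltac:(lra) Hb.
have := @arith_a (Q t x0 y0) (Q (~~ t) x0 y0) e Ha Hb ltac:(lra) ltac:(rewrite /e; lra).
rewrite (_ : Q t x0 y0 + e * ((1 - 0) * (1 - 0)) = Q t x0 y0 + e); last ring.
lra.
Qed.

Lemma crossQ_b P Q t x1 x y y' : is_dist P -> 0 < pT P false -> 0 < pT P true ->
  is_argmax_condH P Q -> in_relint_DeltaP P Q ->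
  inXt P t x1 -> ~ inXt P (~~ t) x1 -> inXt P t x -> inXt P (~~ t) x ->
  inYt P t y -> inYt P (~~ t) y -> inYt P t y' -> inYt P (~~ t) y' -> y != y' ->
  ~ (Q t x y * Q (~~ t) x y' < Q t x y' * Q (~~ t) x y).
Proof.
move=> HP H0 H1 [HQ Hmax] Hrel Hx1 Hx1n Hxt Hxn Hyt Hyn Hy't Hy'n Hy Hlt.
have Hx : x != x1 := neq_of_in Hxn Hx1n.
have [e0 [He0 Hin]] := perturb_in HP H0 H1 Hrel Hx Hy Hxt Hx1 Hyt Hy't.
have Ha := relint_pos HP H0 H1 Hrel Hxt Hyt.
have Hb := relint_pos HP H0 H1 Hrel Hxn Hyn.
have Ha' := relint_pos HP H0 H1 Hrel Hxt Hy't.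
have Hb' := relint_pos HP H0 H1 Hrel Hxn Hy'n.
have Hnt := pT_pos (~~ t) H0 H1.
have Zx := notX_zero HP Hnt HQ Hx1n.
have [e [He [Hea Har]]] := arith_bc Ha Hb Ha' Hb' Hlt He0.
have HQ' := Hin e He.
have := Hmax _ HQ'.
rewrite condH_diff // (cc_pure _ _ _ _ _ (Zx y)) (cc_pure _ _ _ _ _ (Zx y'))
  !cc_gen !ind_eq (ind_neq Hx) (ind_neq Hy) (ind_neq (a:=y') (b:=y) ltac:(by rewrite eq_sym)).
rewrite (_ : Q t x y + e * ((1 - 0) * (1 - 0)) = Q t x y + e); last ring.
rewrite (_ : Q t x y' + e * ((1 - 0) * (0 - 1)) = Q t x y' - e); last ring.
have := cellf_change (a := Q t x y) (a2 := Q t x y + e) Ha ltac:(lra) Hb.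
have := cellf_change (a := Q t x y') (a2 := Q t x y' - e) Ha' ltac:(lra) Hb'.
lra.
Qed.

Lemma crossQ_c P Q t y1 x x' y : is_dist P -> 0 < pT P false -> 0 < pT P true ->
  is_argmax_condH P Q -> in_relint_DeltaP P Q ->
  inYt P t y1 -> ~ inYt P (~~ t) y1 -> inYt P t y -> inYt P (~~ t) y ->
  inXt P t x -> inXt P (~~ t) x -> inXt P t x' -> inXt P (~~ t) x' -> x != x' ->
  ~ (Q t x y * Q (~~ t) x' y < Q t x' y * Q (~~ t) x y).
Proof.
move=> HP H0 H1 [HQ Hmax] Hrel Hy1 Hy1n Hyt Hyn Hxt Hxn Hx't Hx'n Hx Hlt.
have Hy : y != y1 := neqY_of_in Hyn Hy1n.
have [e0 [He0 Hin]] := perturb_in HP H0 H1 Hrel Hx Hy Hxt Hx't Hyt Hy1.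
have Ha := relint_pos HP H0 H1 Hrel Hxt Hyt.
have Hb := relint_pos HP H0 H1 Hrel Hxn Hyn.
have Ha' := relint_pos HP H0 H1 Hrel Hx't Hyt.
have Hb' := relint_pos HP H0 H1 Hrel Hx'n Hyn.
have Hnt := pT_pos (~~ t) H0 H1.
have Zy := notY_zero HP Hnt HQ Hy1n.
have [e [He [Hea Har]]] := arith_bc Ha Hb Ha' Hb' Hlt He0.
have HQ' := Hin e He.
have := Hmax _ HQ'.
rewrite condH_diff // (cc_pure _ _ _ _ _ (Zy x)) (cc_pure _ _ _ _ _ (Zy x'))
  !cc_gen !ind_eq (ind_neq Hx) (ind_neq Hy) (ind_neq (a:=x') (b:=x) ltac:(by rewrite eq_sym)).
rewrite (_ : Q t x y + e * ((1 - 0) * (1 - 0)) = Q t x y + e); last ring.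
rewrite (_ : Q t x' y + e * ((0 - 1) * (1 - 0)) = Q t x' y - e); last ring.
have := cellf_change (a := Q t x y) (a2 := Q t x y + e) Ha ltac:(lra) Hb.
have := cellf_change (a := Q t x' y) (a2 := Q t x' y - e) Ha' ltac:(lra) Hb'.
lra.
Qed.

Lemma part3b P Qs t x0 y0 x1 : is_dist P -> 0 < pT P false -> 0 < pT P true ->
  inXt P false x0 -> inXt P true x0 -> inYt P false y0 -> inYt P true y0 ->
  inXt P t x1 -> ~ inXt P (~~ t) x1 ->
  in_relint_DeltaP P Qs -> is_argmax_condH P Qs ->
  CI_T_Y_given_X (cond_on_Yt P Qs t).
Proof.
move=> HP H0 H1 Hx0f Hx0t Hy0f Hy0t Hx1 Hx1n Hrel Hmax.
have HQ := proj1 Hmax.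
have Hsub : forall y, inYt P t y -> inYt P (~~ t) y.
  move=> y Hy; case: (Rlt_dec 0 (pTY P (~~ t) y / pT P (~~ t))) => // Hn.
  exfalso; exact: (part3a HP H0 H1 Hx0f Hx0t Hy0f Hy0t Hx1 Hx1n Hy Hn Hmax Hrel).
have Ct : forall x y1 y2, inYt P t y1 -> inYt P t y2 ->
    Qs t x y1 * Qs (~~ t) x y2 = Qs t x y2 * Qs (~~ t) x y1.
  move=> x y1 y2 Hy1 Hy2.
  case: (Rlt_dec 0 (pTX P t x / pT P t)) => Hxt; last first.
    by rewrite !(notX_zero HP (pT_pos t H0 H1) HQ Hxt); ring.
  case: (Rlt_dec 0 (pTX P (~~ t) x / pT P (~~ t))) => Hxn; last first.
    by rewrite !(notX_zero HP (pT_pos (~~ t) H0 H1) HQ Hxn); ring.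
  case: (eqVneq y1 y2) => [->|Hne]; first ring.
  case: (Rtotal_order (Qs t x y1 * Qs (~~ t) x y2) (Qs t x y2 * Qs (~~ t) x y1))
    => [Hlt|[Heq|Hgt]] //.
  - by exfalso; apply: (crossQ_b HP H0 H1 Hmax Hrel Hx1 Hx1n Hxt Hxn Hy1 (Hsub _ Hy1) Hy2 (Hsub _ Hy2) Hne).
  - exfalso; apply: (crossQ_b HP H0 H1 Hmax Hrel Hx1 Hx1n Hxt Hxn Hy2 (Hsub _ Hy2) Hy1 (Hsub _ Hy1)).
      by rewrite eq_sym.
    exact: Hgt.
move=> s x y; apply: crossX => y1 y2; rewrite /cond_on_Yt; set ZZ := sum3 _.
rewrite /indYt.
case: (Rlt_dec 0 (pTY P t y1 / pT P t)) => Hy1;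
case: (Rlt_dec 0 (pTY P t y2 / pT P t)) => Hy2 /=; rewrite /Rdiv; [|ring|ring|ring].
have Hc : Qs true x y1 * Qs false x y2 = Qs true x y2 * Qs false x y1.
  have := Ct x y1 y2 Hy1 Hy2; have := Ct x y2 y1 Hy2 Hy1; case: (t) => /= *; nra.
transitivity ((Qs true x y1 * Qs false x y2) * (/ ZZ * / ZZ)); first by rewrite /Rdiv; ring.
by rewrite Hc /Rdiv; ring.
Qed.

Lemma part3c P Qs t x0 y0 y1 : is_dist P -> 0 < pT P false -> 0 < pT P true ->
  inXt P false x0 -> inXt P true x0 -> inYt P false y0 -> inYt P true y0 ->
  inYt P t y1 -> ~ inYt P (~~ t) y1 ->
  in_relint_DeltaP P Qs -> is_argmax_condH P Qs ->
  CI_T_X_given_Y (cond_on_Xt P Qs t).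
Proof.
move=> HP H0 H1 Hx0f Hx0t Hy0f Hy0t Hy1 Hy1n Hrel Hmax.
have HQ := proj1 Hmax.
have Hsub : forall x, inXt P t x -> inXt P (~~ t) x.
  move=> x Hx; case: (Rlt_dec 0 (pTX P (~~ t) x / pT P (~~ t))) => // Hn.
  exfalso; exact: (part3a HP H0 H1 Hx0f Hx0t Hy0f Hy0t Hx Hn Hy1 Hy1n Hmax Hrel).
have Ct : forall y x1 x2, inXt P t x1 -> inXt P t x2 ->
    Qs t x1 y * Qs (~~ t) x2 y = Qs t x2 y * Qs (~~ t) x1 y.
  move=> y x1 x2 Hx1 Hx2.
  case: (Rlt_dec 0 (pTY P t y / pT P t)) => Hyt; last first.
    by rewrite !(notY_zero HP (pT_pos t H0 H1) HQ Hyt); ring.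
  case: (Rlt_dec 0 (pTY P (~~ t) y / pT P (~~ t))) => Hyn; last first.
    by rewrite !(notY_zero HP (pT_pos (~~ t) H0 H1) HQ Hyn); ring.
  case: (eqVneq x1 x2) => [->|Hne]; first ring.
  case: (Rtotal_order (Qs t x1 y * Qs (~~ t) x2 y) (Qs t x2 y * Qs (~~ t) x1 y))
    => [Hlt|[Heq|Hgt]] //.
  - by exfalso; apply: (crossQ_c HP H0 H1 Hmax Hrel Hy1 Hy1n Hyt Hyn Hx1 (Hsub _ Hx1) Hx2 (Hsub _ Hx2) Hne).
  - exfalso; apply: (crossQ_c HP H0 H1 Hmax Hrel Hy1 Hy1n Hyt Hyn Hx2 (Hsub _ Hx2) Hx1 (Hsub _ Hx1)).
      by rewrite eq_sym.
    exact: Hgt.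
move=> s x y; apply: crossY => x1 x2; rewrite /cond_on_Xt; set ZZ := sum3 _.
rewrite /indXt.
case: (Rlt_dec 0 (pTX P t x1 / pT P t)) => Hx1;
case: (Rlt_dec 0 (pTX P t x2 / pT P t)) => Hx2 /=; rewrite /Rdiv; [|ring|ring|ring].
have Hc : Qs true x1 y * Qs false x2 y = Qs true x2 y * Qs false x1 y.
  have := Ct y x1 x2 Hx1 Hx2; have := Ct y x2 x1 Hx2 Hx1; case: (t) => /= *; nra.
transitivity ((Qs true x1 y * Qs false x2 y) * (/ ZZ * / ZZ)); first by rewrite /Rdiv; ring.
by rewrite Hc /Rdiv; ring.
Qed.
End S.

Theorem mainTheorem14 (X Y : finType) (P : fun3 X Y) :
  is_dist P -> 0 < pT P false -> 0 < pT P true ->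
  (* (1) *)
  ((~ exists x, inXt P false x /\ inXt P true x) ->
     forall Q, in_DeltaP P Q -> CI_T_Y_given_X Q) /\
  (* (2) *)
  ((~ exists y, inYt P false y /\ inYt P true y) ->
     forall Q, in_DeltaP P Q -> CI_T_X_given_Y Q) /\
  (* (3) *)
  ((exists x, inXt P false x /\ inXt P true x) ->
   (exists y, inYt P false y /\ inYt P true y) ->
     (* (a) *)
     ((exists t, (exists x, inXt P t x /\ ~ inXt P (~~ t) x) /\
                 (exists y, inYt P t y /\ ~ inYt P (~~ t) y)) ->
        forall Q, is_argmax_condH P Q -> ~ in_relint_DeltaP P Q) /\
     (* (b) *)
     (forall t, (exists x, inXt P t x /\ ~ inXt P (~~ t) x) ->
        forall Qs, in_relint_DeltaP P Qs -> is_argmax_condH P Qs ->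
          CI_T_Y_given_X (cond_on_Yt P Qs t)) /\
     (* (c) *)
     (forall t, (exists y, inYt P t y /\ ~ inYt P (~~ t) y) ->
        forall Qs, in_relint_DeltaP P Qs -> is_argmax_condH P Qs ->
          CI_T_X_given_Y (cond_on_Xt P Qs t))).
Proof.
move=> HP H0 H1; split; [exact: part1|split; [exact: part2|]].
move=> [x0 [Hx0f Hx0t]] [y0 [Hy0f Hy0t]]; split; [|split].
- move=> [t [[x1 [Hx1 Hx1n]] [y1 [Hy1 Hy1n]]]] Q Hmax.
  exact: (part3a HP H0 H1 Hx0f Hx0t Hy0f Hy0t Hx1 Hx1n Hy1 Hy1n Hmax).
- move=> t [x1 [Hx1 Hx1n]] Qs Hrel Hmax.
  exact: (part3b HP H0 H1 Hx0f Hx0t Hy0f Hy0t Hx1 Hx1n Hrel Hmax).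
- move=> t [y1 [Hy1 Hy1n]] Qs Hrel Hmax.
  exact: (part3c HP H0 H1 Hx0f Hx0t Hy0f Hy0t Hy1 Hy1n Hrel Hmax).
Qed.
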